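(* Let $G$ be a graph, $k\ge1$, and suppose $M_k(G)$ is a connected matroid. Then a set $B\subseteq E(G)$ is a base of $M_k(G)$ if and only if $\Delta G\langle B\rangle=k-1$, $V(G\langle B\rangle)=V(G)$, and $G\langle B\rangle$ has no tree component (i.e. $\Delta A\ge0$ for every component $A$ of $G\langle B\rangle$).
   Context: Graphs are finite, may have loops and parallel edges, and have no isolated vertices. $\Delta H=|E(H)|-|V(H)|$. For $X\subseteq E(G)$, $G\langle X\rangle$ is the subgraph with edge set $X$ and vertex set the vertices incident to $X$. For $k\ge0$, $M_k(G)$ is the matroid on $E(G)$ whose circuits are the inclusion-minimal members of $\{C\subseteq E(G):C\neq\emptyset,\ |C|=|V(G\langle C\rangle)|+k\}$. A matroid is connected if its ground set has at least two elements and every two elements lie in a common circuit. *)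

(* Defs.v *)
From HB Require Import structures.
From mathcomp Require Import all_boot all_order all_algebra.
Set Implicit Arguments. Unset Strict Implicit. Unset Printing Implicit Defensive.
Import Order.TTheory GRing.Theory Num.Theory.

(* A (multi)graph: finite vertex type V, finite edge type E, and an
   endpoint map [ends : E -> V * V]; a loop is an edge e with
   ends e = (v, v); parallel edges are distinct edges with the same ends. *)
Section Graphs.
Variables (V E : finType) (ends : E -> V * V).

Definition incident (v : V) (e : E) : bool :=
  (v == (ends e).1) || (v == (ends e).2).

Definition no_isolated : Prop := forall v : V, exists e : E, incident v e.

Definition Vsub (X : {set E}) : {set V} := [set v | [exists e in X, incident v e]].

Definition deltaSub (X : {set E}) : int := (#|X|%:Z - #|Vsub X|%:Z)%R.

Definition Mk_dep (k : nat) (C : {set E}) : bool :=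
  (C != set0) && (#|C| == #|Vsub C| + k).

Definition Mk_circuit (k : nat) (C : {set E}) : bool :=
  Mk_dep k C && [forall D : {set E}, (D \proper C) ==> ~~ Mk_dep k D].

Definition Mk_indep (k : nat) (I : {set E}) : bool :=
  [forall C : {set E}, (C \subset I) ==> ~~ Mk_circuit k C].

Definition Mk_base (k : nat) (B : {set E}) : bool :=
  Mk_indep k B && [forall I : {set E}, (B \proper I) ==> ~~ Mk_indep k I].

Definition Mk_connected (k : nat) : Prop :=
  2 <= #|E| /\
  forall e f : E, exists C : {set E}, Mk_circuit k C /\ e \in C /\ f \in C.

Definition adjSub (X : {set E}) : rel V :=
  fun u v => [exists e in X, (ends e == (u, v)) || (ends e == (v, u))].

(* vertex set of the component of G<X> containing v (for v in V(G<X>)) *)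
Definition compV (X : {set E}) (v : V) : {set V} := [set u | connect (adjSub X) v u].

Definition compE (X : {set E}) (v : V) : {set E} :=
  [set e in X | (ends e).1 \in compV X v].

Definition no_tree_component (X : {set E}) : Prop :=
  forall v : V, v \in Vsub X -> (#|compV X v| <= #|compE X v|)%N.

End Graphs.

(* Main.v *)
Require Import Defs.
From HB Require Import structures.
From mathcomp Require Import all_boot all_order all_algebra.
From mathcomp Require Import zify.
Import Order.TTheory GRing.Theory Num.Theory.
Set Implicit Arguments. Unset Strict Implicit. Unset Printing Implicit Defensive.

Lemma VsubP (V E : finType) (ends : E -> V * V) (X : {set E}) v :
  reflect (exists2 e, e \in X & incident ends v e) (v \in Vsub ends X).
Proof.
rewrite inE; apply: (iffP existsP) => [[e /andP[]]|[e he hi]];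
  [by exists e | by exists e; rewrite he].
Qed.

Lemma VsubS (V E : finType) (ends : E -> V * V) (X Y : {set E}) :
  X \subset Y -> Vsub ends X \subset Vsub ends Y.
Proof.
move=> sXY; apply/subsetP => v /VsubP [e he hi]; apply/VsubP; exists e => //.
exact: (subsetP sXY).
Qed.

Lemma VsubU (V E : finType) (ends : E -> V * V) (X Y : {set E}) :
  Vsub ends (X :|: Y) = Vsub ends X :|: Vsub ends Y.
Proof.
apply/setP => v; rewrite in_setU; apply/VsubP/orP.
  by move=> [e]; rewrite inE => /orP[] he hi; [left|right]; apply/VsubP; exists e.
by case=> /VsubP [e he hi]; exists e => //; rewrite inE he ?orbT.
Qed.

Lemma Vsub_gt0 (V E : finType) (ends : E -> V * V) (X : {set E}) :
  X != set0 -> 0 < #|Vsub ends X|.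
Proof.
case/set0Pn => e he; rewrite card_gt0; apply/set0Pn; exists (ends e).1.
by apply/VsubP; exists e => //; rewrite /incident eqxx.
Qed.

Lemma Vsub1 (V E : finType) (ends : E -> V * V) g :
  Vsub ends [set g] \subset [set (ends g).1; (ends g).2].
Proof.
apply/subsetP => v /VsubP [e]; rewrite inE => /eqP -> /orP[] /eqP ->;
  by rewrite !inE eqxx ?orbT.
Qed.

Lemma step_dep (V E : finType) (ends : E -> V * V) k (X : {set E}) :
  1 <= k -> X != set0 -> #|Vsub ends X| + k <= #|X| ->
  exists2 C : {set E}, C \subset X & Mk_dep ends k C.
Proof.
move=> hk; move: {2}#|X| (leqnn #|X|) => n; elim: n X => [|n IH] X hn hX hc.
  by move: hX; rewrite -card_gt0; lia.
case: (boolP (#|X| == #|Vsub ends X| + k)) => heq.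
  by exists X => //; rewrite /Mk_dep hX heq.
case/set0Pn: hX => e he.
have hcd := cardsD1 e X; rewrite he in hcd.
have sub : X :\ e \subset X by apply: subsetDl.
have hV := subset_leq_card (VsubS ends sub).
have [C hC1 hC2] : exists2 C : {set E}, C \subset X :\ e & Mk_dep ends k C.
  apply: IH; first lia.
    rewrite -card_gt0; lia.
  lia.
by exists C => //; apply: subset_trans hC1 sub.
Qed.

Lemma dep_circuit (V E : finType) (ends : E -> V * V) k (C : {set E}) :
  Mk_dep ends k C -> exists2 D : {set E}, D \subset C & Mk_circuit ends k D.
Proof.
move: {2}#|C| (leqnn #|C|) => n; elim: n C => [|n IH] C hn hd.
  move: hd => /andP[]; rewrite -card_gt0; lia.
case: (boolP [forall D : {set E}, (D \proper C) ==> ~~ Mk_dep ends k D]) => hf.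
  by exists C => //; rewrite /Mk_circuit hd hf.
move/forallPn: hf => [D]; rewrite negb_imply negbK => /andP[hDC hD].
have hlt := proper_card hDC.
have [D' h1 h2] := IH D ltac:(lia) hD.
by exists D' => //; apply: subset_trans h1 (proper_sub hDC).
Qed.

Lemma indep_le (V E : finType) (ends : E -> V * V) k (I Y : {set E}) :
  1 <= k -> Mk_indep ends k I -> Y \subset I -> Y != set0 ->
  #|Y| + 1 <= #|Vsub ends Y| + k.
Proof.
move=> hk hI hY hne; rewrite leqNgt; apply/negP => hlt.
have [C hC hd] := @step_dep _ _ ends k Y hk hne ltac:(lia).
have [D hD hc] := dep_circuit hd.
move/forallP: hI => /(_ D) /implyP H.
by have := H (subset_trans hD (subset_trans hC hY)); rewrite hc.
Qed.

Lemma le_indep (V E : finType) (ends : E -> V * V) k (I : {set E}) :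
  (forall Y : {set E}, Y \subset I -> Y != set0 -> #|Y| + 1 <= #|Vsub ends Y| + k) ->
  Mk_indep ends k I.
Proof.
move=> H; apply/forallP => C; apply/implyP => hC; apply/negP.
move=> /andP[/andP[hne /eqP hc] _]; have := H C hC hne; lia.
Qed.

Lemma circuit_proper (V E : finType) (ends : E -> V * V) k (C D : {set E}) :
  1 <= k -> Mk_circuit ends k C -> D \proper C -> D != set0 ->
  #|D| + 1 <= #|Vsub ends D| + k.
Proof.
move=> hk /andP[_ /forallP hf] hDC hne; rewrite leqNgt; apply/negP => hlt.
have [D' hD' hd] := @step_dep _ _ ends k D hk hne ltac:(lia).
by move: (hf D'); rewrite (sub_proper_trans hD' hDC) hd.
Qed.

Lemma not_indep (V E : finType) (ends : E -> V * V) k (I : {set E}) :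
  ~~ Mk_indep ends k I -> exists2 C : {set E}, C \subset I & Mk_circuit ends k C.
Proof.
move/forallPn => [C]; rewrite negb_imply negbK => /andP[h1 h2]; by exists C.
Qed.

Lemma connect_pres (T : finType) (e : rel T) (P : pred T) :
  (forall a b, e a b -> P a -> P b) -> forall x y, connect e x y -> P x -> P y.
Proof.
move=> H x y /connectP [p]; elim: p x => [|z p IH] x /=; first by move=> _ ->.
move=> /andP[hxz hp] hy hx; exact: IH hp hy (H _ _ hxz hx).
Qed.

Lemma adj_sym (V E : finType) (ends : E -> V * V) (X : {set E}) a b :
  adjSub ends X a b -> adjSub ends X b a.
Proof.
move=> /existsP [e /andP[he h]]; apply/existsP; exists e; rewrite he /=.
by rewrite orbC.
Qed.

Lemma adj_edge (V E : finType) (ends : E -> V * V) (X : {set E}) h :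
  h \in X -> adjSub ends X (ends h).1 (ends h).2.
Proof.
move=> hX; apply/existsP; exists h; rewrite hX /=.
by case: (ends h) => a b /=; rewrite eqxx.
Qed.

Lemma adjP (V E : finType) (ends : E -> V * V) (X : {set E}) a b :
  adjSub ends X a b -> exists2 h, h \in X & incident ends a h && incident ends b h.
Proof.
move=> /existsP [h /andP[hX /orP[] /eqP he]]; exists h => //;
  by rewrite /incident he /= !eqxx ?orbT.
Qed.

Lemma compV_Vsub (V E : finType) (ends : E -> V * V) (X : {set E}) v :
  v \in Vsub ends X -> compV ends X v \subset Vsub ends X.
Proof.
move=> hv; apply/subsetP => u; rewrite inE => hc.
apply: (connect_pres (P := mem (Vsub ends X))) hc hv => a b /adjP [h hX /andP[_ hb]] _.
by apply/VsubP; exists h.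
Qed.

Lemma compV_edge (V E : finType) (ends : E -> V * V) (X : {set E}) v h :
  h \in X -> ((ends h).1 \in compV ends X v) = ((ends h).2 \in compV ends X v).
Proof.
move=> hX; rewrite !inE; apply/idP/idP => H; apply: (connect_trans H); apply: connect1.
  exact: adj_edge.
exact/adj_sym/adj_edge.
Qed.

Lemma compE_sub (V E : finType) (ends : E -> V * V) (X : {set E}) v :
  compE ends X v \subset X.
Proof. by apply/subsetP => h; rewrite inE => /andP[]. Qed.

Lemma Vsub_compE (V E : finType) (ends : E -> V * V) (X : {set E}) v :
  Vsub ends (compE ends X v) \subset compV ends X v.
Proof.
apply/subsetP => w /VsubP [h]; rewrite inE => /andP[hX h1] /orP[] /eqP ->//.
by rewrite -(compV_edge ends v hX).
Qed.

Lemma Vsub_compD (V E : finType) (ends : E -> V * V) (X : {set E}) v w :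
  w \in Vsub ends (X :\: compE ends X v) -> w \notin compV ends X v.
Proof.
move=> /VsubP [h]; rewrite !inE negb_and => /andP[/orP[] hn hX] /orP[] /eqP ->;
  rewrite ?hX //= in hn.
apply/negP => c; move/negP: hn; apply; apply: (connect_trans c); apply: connect1.
exact/adj_sym/adj_edge.
Qed.

Lemma fY (V E : finType) (ends : E -> V * V) (B : {set E}) :
  no_tree_component ends B -> forall Y : {set E},
  #|Vsub ends B :\: Vsub ends Y| <= #|B :\: Y|.
Proof.
move=> nt Y; move: {2}#|B :\: Y| (leqnn #|B :\: Y|) => n.
elim: n Y => [|n IH] Y hn.
  have : B :\: Y == set0 by rewrite -cards_eq0; lia.
  rewrite setD_eq0 => /(VsubS ends); rewrite -setD_eq0 => /eqP ->.
  by rewrite cards0.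
case: (boolP (B :\: Y == set0)) => h0.
  move: h0; rewrite setD_eq0 => /(VsubS ends); rewrite -setD_eq0 => /eqP ->.
  by rewrite cards0.
case: (boolP [exists g in B :\: Y, [exists w in Vsub ends Y, incident ends w g]]).
  move=> /existsP [g /andP[hg /existsP [w /andP[hw hwg]]]].
  set Y' := g |: Y.
  have hD : (B :\: Y) :\ g = B :\: Y'.
    by apply/setP => x; rewrite !inE; case: (x == g); case: (x \in Y).
  have hc := cardsD1 g (B :\: Y); rewrite hg hD in hc.
  have IH' := IH Y' ltac:(lia).
  set o := if w == (ends g).1 then (ends g).2 else (ends g).1.
  have sub : Vsub ends B :\: Vsub ends Y \subset (Vsub ends B :\: Vsub ends Y') :|: [set o].
    apply/subsetP => x; rewrite in_setD => /andP[hxY hxB].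
    rewrite in_setU in_setD hxB andbT /Y' VsubU in_setU negb_or hxY andbT.
    case: (boolP (x \in Vsub ends [set g])) => //= /VsubP [g'].
    rewrite inE => /eqP -> hxg; rewrite inE.
    have hxw : x != w by apply/eqP => exw; rewrite exw hw in hxY.
    rewrite /o; move: hwg hxg hxw; rewrite /incident.
    case: (w =P (ends g).1) => [->|_] /=.
      by move=> _ /orP[] /eqP ->; rewrite ?eqxx.
    by move=> /eqP -> /orP[] /eqP ->; rewrite ?eqxx.
  have := subset_leq_card sub; have := cardsUI (Vsub ends B :\: Vsub ends Y') [set o].
  rewrite cards1; lia.
move=> hno; case/set0Pn: h0 => g hg.
have hgB : g \in B by move: hg; rewrite inE => /andP[].
set v := (ends g).1.
have hv : v \in Vsub ends B by apply/VsubP; exists g; rewrite // /incident eqxx.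
set A := compE ends B v.
have notY : forall u, u \in compV ends B v -> u \notin Vsub ends Y.
  move=> u; rewrite inE => hc.
  apply: (connect_pres (P := [pred u | u \notin Vsub ends Y])) hc _.
    move=> a b /existsP [h /andP[hB hab]] /= ha.
    have ia : incident ends a h.
      by case/orP: hab => /eqP he; rewrite /incident he /= eqxx ?orbT.
    have ib : incident ends b h.
      by case/orP: hab => /eqP he; rewrite /incident he /= eqxx ?orbT.
    have hY : h \notin Y by apply/negP => hY; move: ha; rewrite /= ; apply/negP/negPn/VsubP; exists h.
    apply/negP => hbY; move/negP: hno; apply; apply/existsP; exists h.
    rewrite inE hY hB /=; apply/existsP; exists b; by rewrite hbY.
  rewrite /=; apply/negP => hvY; move/negP: hno; apply; apply/existsP; exists g.
  rewrite hg /=; apply/existsP; exists v; by rewrite hvY /incident eqxx.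
have hAY : forall h, h \in A -> h \notin Y.
  move=> h; rewrite inE => /andP[_ h1]; apply/negP => hY.
  by move: (notY _ h1) => /negP; apply; apply/VsubP; exists h; rewrite // /incident eqxx.
have gA : g \in A by rewrite inE hgB /= inE connect0.
have hAB := compE_sub ends B v.
set Y' := Y :|: A.
have hcard : #|B :\: Y| = #|B :\: Y'| + #|A|.
  have := cardsID A (B :\: Y).
  have -> : (B :\: Y) :&: A = A.
    apply/setIidPr/subsetP => h hA; rewrite inE hAY //=; exact: (subsetP hAB).
  by rewrite setDDl -/Y'; lia.
have hA1 : 0 < #|A| by rewrite card_gt0; apply/set0Pn; exists g.
have IH' := IH Y' ltac:(lia).
have hnt := nt v hv; rewrite -/A in hnt.
have sub : Vsub ends B :\: Vsub ends Y \subset (Vsub ends B :\: Vsub ends Y') :|: compV ends B v.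
  apply/subsetP => x; rewrite in_setD => /andP[hxY hxB].
  rewrite in_setU in_setD hxB andbT /Y' VsubU in_setU negb_or hxY /=.
  case: (boolP (x \in Vsub ends A)) => //= hxA.
  by rewrite (subsetP (Vsub_compE ends B v)).
have := subset_leq_card sub.
have := cardsUI (Vsub ends B :\: Vsub ends Y') (compV ends B v).
lia.
Qed.

Definition tight (V E : finType) (ends : E -> V * V) k (B T : {set E}) :=
  [&& T \subset B, T != set0 & #|T| + 1 == #|Vsub ends T| + k].

Lemma arith_contra (k x1 x2 c2 t v2 i2 u d c1 v1 y z vc c : nat) :
 x1 + 1 <= x2 + k -> x1 + 0 = c2 + t -> x2 + i2 = v2 + u -> i2 + d = v2 ->
 t + 1 = u + k -> c1 + 1 <= v1 + k -> z = 0 -> y <= vc -> y + z = v1 + d ->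
 c1 + c2 = c -> c = vc + k -> False.
Proof. lia. Qed.

Lemma ar_inside (k a b : nat) : a + 1 = b + k -> true + a + 1 <= b + k -> False.
Proof. lia. Qed.
Lemma ar1 (k a b cv vb : nat) : 0 < k -> a + 0 = b -> cv <= vb -> b + 1 = vb + k -> a < cv -> False.
Proof. lia. Qed.
Lemma ar2 (k y vy cv a b vb u i : nat) : y + 1 <= vy + k -> i = 0 -> u <= vb ->
  u + i = vy + cv -> a + y = b -> b + 1 = vb + k -> a < cv -> False.
Proof. lia. Qed.

Lemma forward (V E : finType) (ends : E -> V * V) (k : nat) :
  no_isolated ends -> (1 <= k)%N -> Mk_connected ends k ->
  forall B : {set E}, Mk_base ends k B ->
  #|B| + 1 = #|Vsub ends B| + k /\ Vsub ends B = [set: V] /\ no_tree_component ends B.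
Proof.
move=> noiso hk [hE2 hconn] B /andP[hI /forallP hmax].
have hB : forall Y : {set E}, Y \subset B -> Y != set0 -> #|Y| + 1 <= #|Vsub ends Y| + k.
  by move=> Y; apply: indep_le.
have circB : forall C, Mk_circuit ends k C -> ~~ (C \subset B).
  move=> C hC; apply/negP => sCB; move/forallP: hI => /(_ C) /implyP /(_ sCB).
  by rewrite hC.
have stepA : forall e, e \notin B -> exists2 T, tight ends k B T & Vsub ends [set e] \subset Vsub ends T.
  move=> e heB.
  have hpr : B \proper B :|: [set e].
    apply/properP; split; first exact: subsetUl.
    by exists e; rewrite // !inE eqxx orbT.
  have := hmax (B :|: [set e]); rewrite hpr /= => /not_indep [C hCs hC].
  have hCd := hC; move: hCd => /andP[/andP[hCne /eqP hCc] _].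
  have heC : e \in C.
    apply/negPn/negP => heC; move/negP: (circB C hC); apply.
    apply/subsetP => x hx; move: (subsetP hCs x hx); rewrite !inE.
    by case/orP => // /eqP exe; rewrite -exe hx in heC.
  set T := C :\ e.
  have hTB : T \subset B.
    apply/subsetP => x; rewrite !inE => /andP[hxe hx]; move: (subsetP hCs x hx).
    by rewrite !inE (negbTE hxe) orbF.
  have hcd := cardsD1 e C; rewrite heC -/T in hcd.
  have hV1 := Vsub_gt0 ends hCne.
  have hTne : T != set0 by rewrite -card_gt0; lia.
  have hT := hB T hTB hTne.
  have sTC : Vsub ends T \subset Vsub ends C by apply: VsubS; apply: subsetDl.
  have hsz := subset_leq_card sTC.
  have eqTC : Vsub ends T = Vsub ends C.
    apply/eqP; rewrite eqEcard sTC /=; lia.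
  exists T.
    by rewrite /tight hTB hTne /=; apply/eqP; rewrite eqTC; lia.
  by rewrite eqTC; apply: VsubS; rewrite sub1set.
have stepB : forall T1 T2, tight ends k B T1 -> tight ends k B T2 -> tight ends k B (T1 :|: T2).
  move=> T1 T2 /and3P[s1 n1 /eqP c1] /and3P[s2 n2 /eqP c2].
  have hI12 : #|T1 :&: T2| + 1 <= #|Vsub ends T1 :&: Vsub ends T2| + k.
    case: (boolP (T1 :&: T2 == set0)) => [/eqP ->|hne]; first by rewrite cards0; lia.
    have := hB _ (subset_trans (subsetIl T1 T2) s1) hne.
    have : Vsub ends (T1 :&: T2) \subset Vsub ends T1 :&: Vsub ends T2.
      by rewrite subsetI !VsubS // ?subsetIl ?subsetIr.
    move/subset_leq_card; lia.
  have sU : T1 :|: T2 \subset B by rewrite subUset s1 s2.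
  have nU : T1 :|: T2 != set0.
    by case/set0Pn: n1 => x hx; apply/set0Pn; exists x; rewrite inE hx.
  have := hB _ sU nU.
  have := cardsUI T1 T2; have := cardsUI (Vsub ends T1) (Vsub ends T2).
  rewrite /tight sU nU /= VsubU => ? ? ?; apply/eqP; lia.
have [f0 _] : exists f0 : E, f0 \in [set: E].
  by apply/card_gt0P; rewrite cardsT; lia.
have [C0 [hC0 [hf0 _]]] := hconn f0 f0.
have [e0 _ he0] := subsetPn (circB C0 hC0).
have [T0 hT0 _] := stepA e0 he0.
case: (@arg_maxnP _ T0 (tight ends k B) (fun T : {set E} => #|T|) hT0) => T hT hmaxT.
have allT : forall T', tight ends k B T' -> T' \subset T.
  move=> T' hT'; have hU := stepB _ _ hT hT'.
  have := hmaxT _ hU => hle.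
  have : T == T :|: T' by rewrite eqEcard subsetUl; exact: hle.
  by move/eqP => ->; apply: subsetUr.
have span : forall e, e \notin B -> Vsub ends [set e] \subset Vsub ends T.
  move=> e he; have [T' hT' s] := stepA e he.
  exact: subset_trans s (VsubS ends (allT _ hT')).
move: (hT) => /and3P[sTB nT /eqP cT].
have inside : forall g, g \in B -> Vsub ends [set g] \subset Vsub ends T -> g \in T.
  move=> g hg sg; apply/negPn/negP => hgT.
  have s' : g |: T \subset B by rewrite subUset sub1set hg sTB.
  have n' : g |: T != set0 by apply/set0Pn; exists g; rewrite !inE eqxx.
  have := hB _ s' n'.
  rewrite cardsU1 hgT VsubU (setUidPr sg) => h; exact: (ar_inside cT h).
have BsubT : B \subset T.
  apply/subsetP => f hf; apply/negPn/negP => hfT.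
  have [C [hC [he0C hfC]]] := hconn e0 f.
  set U := Vsub ends T.
  set F := [set g | Vsub ends [set g] \subset U].
  set C1 := C :&: F.
  set C2 := C :\: F.
  have e0F : e0 \in F by rewrite inE; exact: span.
  have fF : f \notin F by rewrite inE; apply/negP => h; move: (inside f hf h); rewrite (negbTE hfT).
  have C2B : C2 \subset B.
    apply/subsetP => g; rewrite !inE => /andP[hgF _]; apply/negPn/negP => hgB.
    by rewrite span in hgF.
  have C2T : C2 :&: T = set0.
    apply/setP => g; rewrite !inE; case: (boolP (g \in T)) => hgT; last by rewrite andbF.
    by rewrite VsubS ?sub1set.
  have fC2 : f \in C2 by rewrite in_setD fF hfC.
  have nC2 : C2 :|: T != set0 by apply/set0Pn; exists f; rewrite inE fC2.
  have sC2 : C2 :|: T \subset B by rewrite subUset C2B sTB.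
  have h1 := hB _ sC2 nC2.
  rewrite VsubU in h1.
  have h2 := cardsUI C2 T; rewrite C2T cards0 in h2.
  have h3 := cardsUI (Vsub ends C2) U.
  have h4 := cardsID U (Vsub ends C2).
  have pC1 : C1 \proper C.
    apply/properP; split; first exact: subsetIl.
    by exists f => //; rewrite inE (negbTE fF) andbF.
  have nC1 : C1 != set0 by apply/set0Pn; exists e0; rewrite inE he0C e0F.
  have h5 := circuit_proper hk hC pC1 nC1.
  have VC1U : Vsub ends C1 \subset U.
    apply/subsetP => x /VsubP [g]; rewrite inE => /andP[_]; rewrite inE => /subsetP sg hxg.
    by apply: sg; apply/VsubP; exists g; rewrite ?inE.
  have disj : #|Vsub ends C1 :&: (Vsub ends C2 :\: U)| = 0.
    apply/eqP; rewrite cards_eq0; apply/eqP/setP => x.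
    rewrite in_setI in_setD in_set0.
    by case: (boolP (x \in Vsub ends C1)) => //= /(subsetP VC1U) ->.
  have sub : Vsub ends C1 :|: (Vsub ends C2 :\: U) \subset Vsub ends C.
    rewrite subUset; apply/andP; split; first by apply: VsubS; apply: subsetIl.
    apply: subset_trans (subsetDl _ _) _; apply: VsubS; apply: subsetDl.
  have h6 := subset_leq_card sub.
  have h7 := cardsUI (Vsub ends C1) (Vsub ends C2 :\: U).
  have h8 := cardsID F C.
  move: hC => /andP[/andP[_ /eqP h9] _].
  rewrite -/C1 -/C2 in h8.
  exact: (arith_contra h1 h2 h3 h4 cT h5 disj h6 h7 h8 h9).
have eBT : B = T by apply/eqP; rewrite eqEsubset BsubT sTB.
have hVB : Vsub ends B = [set: V].
  apply/setP => v; rewrite in_setT; have [e he] := noiso v.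
  case: (boolP (e \in B)) => heB; first by apply/VsubP; exists e.
  rewrite eBT; apply: (subsetP (span e heB)); apply/VsubP; exists e => //; exact: set11.
split; first by rewrite eBT.
split => //.
move=> v hv; rewrite leqNgt; apply/negP => hlt.
set A := compE ends B v.
have hAB : A \subset B := compE_sub ends B v.
have hc := cardsID A B; rewrite (setIidPr hAB) in hc.
have hcv := subset_leq_card (compV_Vsub hv).
have cB : #|B| + 1 = #|Vsub ends B| + k by rewrite eBT.
case: (boolP (B :\: A == set0)) => [/eqP e0'|hne].
  rewrite e0' cards0 in hc; exact: (ar1 hk hc hcv cB hlt).
have hY := hB _ (subsetDl B A) hne.
have disj : #|Vsub ends (B :\: A) :&: compV ends B v| = 0.
  apply/eqP; rewrite cards_eq0; apply/eqP/setP => x.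
  rewrite in_setI in_set0; case: (boolP (x \in Vsub ends (B :\: A))) => //= hx.
  by apply/negbTE/Vsub_compD.
have sub : Vsub ends (B :\: A) :|: compV ends B v \subset Vsub ends B.
  by rewrite subUset compV_Vsub // VsubS // subsetDl.
have hs := subset_leq_card sub; have hu := cardsUI (Vsub ends (B :\: A)) (compV ends B v).
exact: (ar2 hY disj hs hu hc cB hlt).
Qed.

Lemma ar3 (k d1 d2 y b vy vb : nat) : d1 <= d2 -> y + d2 = b -> vy + d1 = vb ->
  b + 1 = vb + k -> y + 1 <= vy + k.
Proof. lia. Qed.
Lemma ar4 (k b vb u : nat) : b + 1 = vb + k -> true + b + 1 <= u + k -> u <= vb -> False.
Proof. lia. Qed.

Lemma backward (V E : finType) (ends : E -> V * V) (k : nat) :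
  1 <= k -> forall B : {set E}, #|B| + 1 = #|Vsub ends B| + k ->
  Vsub ends B = [set: V] -> no_tree_component ends B -> Mk_base ends k B.
Proof.
move=> hk B hc hV nt.
have hI : Mk_indep ends k B.
  apply: le_indep => Y hY hne.
  have h1 := fY nt Y.
  have h2 := cardsID Y B; rewrite (setIidPr hY) in h2.
  have h3 := cardsID (Vsub ends Y) (Vsub ends B).
  rewrite (setIidPr (VsubS ends hY)) in h3.
  exact: (ar3 h1 h2 h3 hc).
rewrite /Mk_base hI /=; apply/forallP => I; apply/implyP => /properP [sBI [e heI heB]].
apply/negP => hII.
have s : e |: B \subset I by rewrite subUset sub1set heI sBI.
have n : e |: B != set0 by apply/set0Pn; exists e; rewrite !inE eqxx.
have h := indep_le hk hII s n.
rewrite cardsU1 heB in h.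
have hs : #|Vsub ends (e |: B)| <= #|Vsub ends B| by rewrite hV cardsT; exact: max_card.
exact: (ar4 hc h hs).
Qed.

Theorem mainTheorem16 (V E : finType) (ends : E -> V * V) (k : nat) :
  no_isolated ends -> (1 <= k)%N -> Mk_connected ends k ->
  forall B : {set E},
    Mk_base ends k B <->
    [/\ deltaSub ends B = (k%:Z - 1)%R,
        Vsub ends B = [set: V]
      & no_tree_component ends B].
Proof.
move=> noiso hk hconn B; split.
  move=> hb; have [h1 [h2 h3]] := forward noiso hk hconn hb.
  split => //; rewrite /deltaSub; lia.
case=> hd hV hnt; apply: backward hV hnt => //.
move: hd; rewrite /deltaSub; lia.
Qed.
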